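(* Let $p$ be a prime, $\Omega=\mathbb{F}_p[[T]]$ and $\Omega_n=\Omega/(T^n)$ for $n\ge 1$. Let $\mathcal{M}$ be the set of pairs $(N_1,N_2)$ of maximal submodules of $\Omega^2$, equipped with the inverse-limit probability space $(\mathcal{M},\mathcal{A},\mathbb{P})$ described in the context, and let $\mathbb{P}^*$ be the associated outer measure. Then \[\mathbb{P}^*\big(\{(N_1,N_2)\in\mathcal{M}\mid N_1\cap N_2=0\}\big)=1.\] Furthermore, \[\sup\{\mathbb{P}(B)\mid B\in\mathcal{A},\ B\subset \{(N_1,N_2)\in\mathcal{M}\mid N_1\cap N_2=0\}\}=1.\]
   Context: A cyclic submodule $N\subset\Omega^2$ (resp. $N\subset\Omega_n^2$) is called maximal if it is not contained in $T\Omega^2$ (resp. $T\Omega_n^2$). Let $\mathcal{M}_n$ be the (finite) set of pairs $(\bar N_1,\bar N_2)$ of maximal submodules of $\Omega_n^2$, with $\mathcal{A}_n$ its power set and $\mathbb{P}_n$ the uniform probability measure on $\mathcal{M}_n$. Reduction modulo $T^n$ gives projections $\pi_n:\mathcal{M}\to\mathcal{M}_n$ and $\pi_{m,n}:\mathcal{M}_m\to\mathcal{M}_n$ ($m\ge n$), so that $\mathcal{M}=\varprojlim_n\mathcal{M}_n$ and $((\mathcal{M}_n,\mathcal{A}_n,\mathbb{P}_n),\pi_{m,n})$ is a projective system of probability spaces; $(\mathcal{M},\mathcal{A},\mathbb{P})$ denotes its inverse limit (so $\mathbb{P}(\pi_n^{-1}(A))=\mathbb{P}_n(A)$ for $A\in\mathcal{A}_n$).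 For any $X\subset\mathcal{M}$, $\mathbb{P}^*(X):=\inf_{X\subset B\in\mathcal{A}}\mathbb{P}(B)$. *)

(* Defs.v *)
From HB Require Import structures.
From mathcomp Require Import all_boot all_order all_algebra.
From mathcomp Require Import all_classical all_reals all_analysis.
Set Implicit Arguments. Unset Strict Implicit. Unset Printing Implicit Defensive.
Import Order.TTheory GRing.Theory Num.Theory.
Local Open Scope classical_set_scope.
Local Open Scope ring_scope.

Section Omega.
Variable p : nat.

Definition Omega := nat -> 'F_p.
Definition Omega2 := (Omega * Omega)%type.

Definition ps_mul (a b : Omega) : Omega :=
  fun k => \sum_(i < k.+1) a i * b (k - i)%N.
Definition ps_T : Omega := fun k => if k == 1%N then 1 else 0.
Definition scale2 (a : Omega) (v : Omega2) : Omega2 := (ps_mul a v.1, ps_mul a v.2).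
Definition zero2 : Omega2 := (fun _ => 0, fun _ => 0).

Definition cyc (v : Omega2) : set Omega2 := [set scale2 a v | a in [set: Omega]].
Definition TOmega2 : set Omega2 := [set scale2 ps_T w | w in [set: Omega2]].

Definition maximal_sub (N : set Omega2) : Prop :=
  (exists v, N = cyc v) /\ ~ (N `<=` TOmega2).

Definition Omegan (n : nat) := {ffun 'I_n -> 'F_p}.
Definition Omegan2 (n : nat) := (Omegan n * Omegan n)%type.

Definition getc n (a : Omegan n) (k : nat) : 'F_p :=
  if insub k is Some i then a i else 0.
Definition pn_mul n (a b : Omegan n) : Omegan n :=
  [ffun k : 'I_n => \sum_(i < n | (i <= k)%N) getc a i * getc b (k - i)%N].
Definition pn_T n : Omegan n := [ffun k : 'I_n => if val k == 1%N then 1 else 0].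
Definition scalen2 n (a : Omegan n) (v : Omegan2 n) : Omegan2 n :=
  (pn_mul a v.1, pn_mul a v.2).

Definition cycn n (v : Omegan2 n) : {set Omegan2 n} :=
  [set scalen2 a v | a : Omegan n].
Definition TOmegan2 n : {set Omegan2 n} :=
  [set scalen2 (pn_T n) w | w : Omegan2 n].

Definition maximal_subn n (N : {set Omegan2 n}) : bool :=
  [exists v, N == cycn v] && ~~ (N \subset TOmegan2 n).

Definition Mn n : {set {set Omegan2 n} * {set Omegan2 n}} :=
  [set NN | maximal_subn NN.1 & maximal_subn NN.2].

Definition Pn (R : realType) n (A : {set {set Omegan2 n} * {set Omegan2 n}}) : R :=
  (#|A|%:R / #|Mn n|%:R).

Definition M := {NN : set Omega2 * set Omega2 | maximal_sub NN.1 /\ maximal_sub NN.2}.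

Definition trunc n (a : Omega) : Omegan n := [ffun k : 'I_n => a (val k)].
Definition trunc2 n (v : Omega2) : Omegan2 n := (trunc n v.1, trunc n v.2).
Definition red n (N : set Omega2) : {set Omegan2 n} :=
  [set y | `[< exists2 x, N x & trunc2 n x = y >]].
Definition piM n (x : M) : {set Omegan2 n} * {set Omegan2 n} :=
  (red n (sval x).1, red n (sval x).2).

Definition cylinders : set (set M) :=
  [set C | exists n (A : {set {set Omegan2 n} * {set Omegan2 n}}),
     (1 <= n)%N /\ A \subset Mn n /\ C = piM n @^-1` [set x | x \in A]].

End Omega.

Definition e1 p : Omega2 p := (fun k => if k == 0%N then 1 else 0, fun _ => 0).

Lemma maximal_e1 p : maximal_sub (cyc (e1 p)).
Proof.
split; first by exists (e1 p).
move=> /(_ (e1 p)) [].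
  exists (fun k => if k == 0%N then 1 else 0) => //.
  rewrite /scale2 /e1 /ps_mul /=; congr pair; apply: funext => k.
    case: k => [|k]; first by rewrite big_ord1 /= mulr1.
    rewrite big1 // => i _; case: (nat_of_ord i) => [|j] /=.
      by rewrite mulr0.
    by rewrite mul0r.
  by rewrite big1 // => i _; rewrite mulr0.
move=> w _ /(congr1 (fun v => v.1 0%N)) /=.
rewrite /ps_mul /ps_T /= big_ord_recl big_ord0 /= mul0r addr0.
by move/eqP; rewrite eq_sym oner_eq0.
Qed.

Definition M0 p : M p := exist _ (cyc (e1 p), cyc (e1 p)) (conj (maximal_e1 p) (maximal_e1 p)).

Section MPointed.
Variable p : nat.
HB.instance Definition _ := gen_eqMixin (M p).
HB.instance Definition _ := gen_choiceMixin (M p).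
HB.instance Definition _ := isPointed.Build (M p) (M0 p).
End MPointed.

Definition Mmeas p := g_sigma_algebraType (@cylinders p).

Definition outerP d (T : measurableType d) (R : realType)
  (P : probability T R) (X : set T) : \bar R :=
  ereal_inf [set P B | B in [set B | measurable B /\ X `<=` B]].
Definition innerP d (T : measurableType d) (R : realType)
  (P : probability T R) (X : set T) : \bar R :=
  ereal_sup [set P B | B in [set B | measurable B /\ B `<=` X]].

Definition Disj p : set (Mmeas p) :=
  [set x | (sval x).1 `&` (sval x).2 = [set zero2 p]].

(* Main.v *)
Require Import Defs.
From HB Require Import structures.
From mathcomp Require Import all_boot all_order all_algebra.
From mathcomp Require Import all_classical all_reals all_analysis.
From Stdlib Require Import Lia.
From mathcomp Require Import zify.
Set Implicit Arguments. Unset Strict Implicit. Unset Printing Implicit Defensive.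
Import Order.TTheory GRing.Theory Num.Theory.
Local Open Scope ring_scope.

Section Trunc.
Variables (p n : nat).
Implicit Types (a b c u : Omegan p n).

Definition Pol (a : Omegan p n) : {poly 'F_p} := \poly_(i < n) getc a i.

Lemma getc_ge (a : Omegan p n) k : (n <= k)%N -> getc a k = 0.
Proof. by move=> h; rewrite /getc insubN // -leqNgt. Qed.

Lemma getc_ord (a : Omegan p n) (i : 'I_n) : getc a i = a i.
Proof. by rewrite /getc valK. Qed.

Lemma getc_inj (a b : Omegan p n) : (forall k, getc a k = getc b k) -> a = b.
Proof. by move=> h; apply/ffunP => i; rewrite -!getc_ord h. Qed.

Lemma coef_Pol a i : (Pol a)`_i = getc a i.
Proof. by rewrite coef_poly; case: ltnP => // h; rewrite getc_ge. Qed.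

Lemma getc_mul a b k : getc (pn_mul a b) k = if (k < n)%N then (Pol a * Pol b)`_k else 0.
Proof.
rewrite /getc; case: insubP => [i ki vi|nk]; last by rewrite (negbTE nk).
rewrite ki ffunE coefM (big_ord_widen_cond n xpredT (fun j => (Pol a)`_j * (Pol b)`_(k - j)) ki) /=.
by apply: eq_big => [j|j _]; rewrite -?vi ?ltnS ?coef_Pol.
Qed.

Lemma coef_mul_congr (P Q Q' : {poly 'F_p}) k :
  (forall j, (j <= k)%N -> Q`_j = Q'`_j) -> (P * Q)`_k = (P * Q')`_k.
Proof.
move=> h; rewrite !coefM; apply: eq_bigr => j _; congr (_ * _); apply: h.
exact: leq_subr.
Qed.

Lemma pn_mulC a b : pn_mul a b = pn_mul b a.
Proof. by apply: getc_inj => k; rewrite !getc_mul mulrC. Qed.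

Lemma pn_mulA a b c : pn_mul a (pn_mul b c) = pn_mul (pn_mul a b) c.
Proof.
apply: getc_inj => k; rewrite !getc_mul; case: ltnP => // kn.
rewrite (@coef_mul_congr _ _ (Pol b * Pol c)); last first.
  by move=> j jk; rewrite coef_Pol getc_mul (leq_ltn_trans jk kn).
rewrite [in RHS]mulrC [in RHS](@coef_mul_congr _ _ (Pol a * Pol b)); last first.
  by move=> j jk; rewrite coef_Pol getc_mul (leq_ltn_trans jk kn).
by rewrite [Pol c * _]mulrC mulrA.
Qed.

Definition primn (z : Omegan2 p n) : bool := (getc z.1 0 != 0) || (getc z.2 0 != 0).

Lemma mul_inj1 (u : Omegan p n) : getc u 0 != 0 -> injective (fun a => pn_mul a u).
Proof.
move=> u0 a b /= e.
set d := Pol a - Pol b.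
have hd : forall k, (k < n)%N -> (d * Pol u)`_k = 0.
  move=> k kn; have := congr1 (fun x => getc x k) e => /=.
  by rewrite !getc_mul kn mulrBl coefB => ->; rewrite subrr.
have dk : forall k, (k < n)%N -> d`_k = 0.
  elim/ltn_ind => k IH kn; have := hd k kn.
  rewrite coefM big_ord_recr /= big1 ?add0r; last first.
    move=> j _; rewrite IH ?mul0r //; last exact: ltn_trans (ltn_ord j) kn.
  rewrite subnn coef_Pol => /eqP; rewrite mulf_eq0 (negbTE u0) orbF.
  by move/eqP.
apply: getc_inj => k; case: (ltnP k n) => kn; last by rewrite !getc_ge.
by apply/eqP; rewrite -subr_eq0 -!coef_Pol -coefB; apply/eqP; apply: dk.
Qed.

Lemma scale_inj (z : Omegan2 p n) : primn z -> injective (fun a => scalen2 a z).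
Proof.
case/orP => h a b /= [e1 e2]; first exact: (mul_inj1 h).
exact: (mul_inj1 h).
Qed.

Lemma cycn_prim (v z : Omegan2 p n) : primn z -> z \in cycn v -> cycn v = cycn z.
Proof.
move=> pz /imsetP [a _ ez]; apply/esym/eqP; rewrite eqEcard; apply/andP; split.
  apply/fintype.subsetP => y /imsetP [b _ ->]; apply/imsetP; exists (pn_mul b a) => //.
  by rewrite ez /scalen2 /= !pn_mulA.
rewrite (leq_trans (leq_imset_card _ _)) //.
by rewrite /cycn card_imset //; apply: scale_inj.
Qed.

Hypothesis n0 : (0 < n)%N.

Definition en : Omegan p n := [ffun i : 'I_n => if val i == 0%N then 1 else 0].

Lemma Pol_en : Pol en = 1.
Proof.
apply/polyP => i; rewrite coef_Pol coef1 /getc.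
case: insubP => [j _ vj|]; first by rewrite ffunE vj; case: (i == 0%N).
by rewrite -leqNgt; case: i => [|i] h //; have := leq_trans n0 h.
Qed.

Lemma pn_mul1 a : pn_mul en a = a.
Proof.
apply: getc_inj => k; rewrite getc_mul Pol_en mul1r coef_Pol.
by case: ltnP => // h; rewrite getc_ge.
Qed.

Lemma getc_en0 : getc en 0 = 1.
Proof. by rewrite -coef_Pol Pol_en coef1. Qed.

Lemma TOmegan2_0 w : w \in TOmegan2 p n -> getc w.1 0 = 0.
Proof.
case/imsetP => w' _ -> /=; rewrite getc_mul n0 coef0M !coef_Pol.
suff -> : getc (pn_T p n) 0 = 0 by rewrite mul0r.
by rewrite /getc; case: insubP => // j _ vj; rewrite ffunE vj.
Qed.

Definition Sn : {set {set Omegan2 p n}} := [set N | maximal_subn N].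

Definition famn (c : Omegan p n) : {set Omegan2 p n} := cycn (en, c).

Lemma famn_in c : (en, c) \in famn c.
Proof.
by apply/imsetP; exists en => //; rewrite /scalen2 /= !pn_mul1.
Qed.

Lemma famn_max c : famn c \in Sn.
Proof.
rewrite inE /maximal_subn; apply/andP; split.
  by apply/existsP; exists (en, c).
apply/negP => /fintype.subsetP /(_ _ (famn_in c)) /TOmegan2_0 /=.
by rewrite getc_en0 => /eqP; rewrite oner_eq0.
Qed.

Lemma famn_inj : injective famn.
Proof.
move=> c c' e; have := famn_in c'; rewrite -e => /imsetP [a _ [h1 h2]].
move: h1; rewrite pn_mulC pn_mul1 => ea; subst a.
by rewrite h2 pn_mul1.
Qed.

Lemma card_Sn : (#|Omegan p n| <= #|Sn|)%N.
Proof.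
rewrite -(card_imset _ famn_inj); apply: subset_leq_card.
by apply/fintype.subsetP => N /imsetP [c _ ->]; apply: famn_max.
Qed.

Definition Dn : {set {set Omegan2 p n} * {set Omegan2 p n}} :=
  [set NN in Mn p n | [exists z, [&& z \in NN.1, z \in NN.2 & primn z]]].

Lemma Mn_X : Mn p n = finset.setX Sn Sn.
Proof. by apply/setP => -[N1 N2]; rewrite !inE. Qed.

Lemma card_Mn : #|Mn p n| = (#|Sn| * #|Sn|)%N.
Proof. by rewrite Mn_X cardsX. Qed.

Lemma Dn_sub : Dn \subset Mn p n.
Proof. by apply/fintype.subsetP => x; rewrite inE => /andP []. Qed.

Lemma max_cyc (N : {set Omegan2 p n}) : maximal_subn N -> exists v, N = cycn v.
Proof. by case/andP => /existsP [v /eqP ->] _; exists v. Qed.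

Lemma card_Dn : (#|Dn| <= #|Sn|)%N.
Proof.
apply: (@leq_trans #|[set (N, N) | N in Sn]|); last exact: leq_imset_card.
apply: subset_leq_card; apply/fintype.subsetP => -[N1 N2].
rewrite !inE /= => /andP [/andP [m1 m2] /existsP [z /and3P [z1 z2 pz]]].
apply/imsetP; exists N1; first by rewrite inE.
have [v1 e1] := max_cyc m1; have [v2 e2] := max_cyc m2.
move: z1 z2; rewrite e1 e2 => z1 z2.
by rewrite (cycn_prim pz z1) (cycn_prim pz z2).
Qed.

Hypothesis pp : prime p.

Lemma Sn_big : (n <= #|Sn|)%N.
Proof.
apply: leq_trans (card_Sn).
have -> : #|Omegan p n| = (p ^ n)%N.
  rewrite card_ffun card_Fp //; exact: (congr1 (expn p) (card_ord n)).
exact/ltnW/ltn_expl/prime_gt1.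
Qed.

Lemma nat_ineq s d : (d <= s)%N -> (n <= s)%N -> (s * s * n.-1 <= (s * s - d) * n)%N.
Proof. move=> h1 h2; case: n h2 n0 => // m h2 _ /=; nia. Qed.

Lemma Pn_bound (R : realType) :
  ((n.-1)%:R / n%:R <= Pn R (Mn p n :\: Dn) :> R).
Proof.
rewrite /Pn cardsD (finset.setIidPr Dn_sub) card_Mn.
have s0 : (0 < #|Sn| * #|Sn|)%N by rewrite muln_gt0 andbb (leq_trans n0 Sn_big).
rewrite ler_pdivrMr ?ltr0n // mulrAC ler_pdivlMr ?ltr0n //.
rewrite -!natrM ler_nat mulnC; apply: nat_ineq; [exact: card_Dn | exact: Sn_big].
Qed.
End Trunc.
Section Om.
Local Open Scope classical_set_scope.
Variable p : nat.
Implicit Types (a b s : Omega p) (v w z : Omega2 p).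

Definition prim v : Prop := v.1 0%N != 0 \/ v.2 0%N != 0.
Definition shift a : Omega p := fun k => a k.+1.

Lemma ps_mul0 a b : ps_mul a b 0%N = a 0%N * b 0%N.
Proof. by rewrite /ps_mul big_ord1. Qed.

Lemma ps_mulS a b k : a 0%N = 0 -> ps_mul a b k.+1 = ps_mul (shift a) b k.
Proof.
move=> a0; rewrite /ps_mul big_ord_recl /= a0 mul0r add0r.
by apply: eq_bigr => i _; rewrite /shift /bump /= add1n subSS.
Qed.

Lemma ps_T0 s : ps_mul (ps_T p) s 0%N = 0.
Proof. by rewrite ps_mul0 /ps_T /= mul0r. Qed.

Lemma ps_TS s k : ps_mul (ps_T p) s k.+1 = s k.
Proof.
rewrite ps_mulS; last by [].
rewrite /ps_mul big_ord_recl /= /shift /ps_T /= mul1r subn0 big1 ?addr0 //.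
by move=> i _; rewrite /bump /= mul0r.
Qed.

Lemma zero_cyc v : cyc v (zero2 p).
Proof.
exists (fun _ => 0) => //; rewrite /scale2 /zero2; congr pair; apply: funext => k;
  by rewrite /ps_mul big1 // => i _; rewrite mul0r.
Qed.

Lemma max_prim N : maximal_sub N -> exists v, N = cyc v /\ prim v.
Proof.
case=> [[v ->] nsub]; exists v; split => //.
case: (eqVneq (v.1 0%N) 0) => h1; last by left.
case: (eqVneq (v.2 0%N) 0) => h2; last by right.
exfalso; apply: nsub => y [a _ <-].
exists (shift (ps_mul a v.1), shift (ps_mul a v.2)) => //.
rewrite /scale2 /=; congr pair; apply: funext => -[|k];
  by rewrite ?ps_T0 ?ps_TS ?ps_mul0 ?h1 ?h2 ?mulr0.
Qed.

Lemma descent v w : prim v -> prim w -> forall k a b,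
  scale2 a v = scale2 b w -> ((scale2 a v).1 k != 0 \/ (scale2 a v).2 k != 0) ->
  exists a' b', scale2 a' v = scale2 b' w /\ prim (scale2 a' v).
Proof.
move=> pv pw; elim=> [|k IH] a b e nz; first by exists a, b.
case: (eqVneq ((scale2 a v).1 0%N) 0) => h1; last by exists a, b; split => //; left.
case: (eqVneq ((scale2 a v).2 0%N) 0) => h2; last by exists a, b; split => //; right.
have h1' := h1; have h2' := h2; rewrite e in h1' h2'.
move: h1 h2 h1' h2'; rewrite /scale2 /= !ps_mul0 => h1 h2 h1' h2'.
have a0 : a 0%N = 0.
  case: pv => pv; apply/eqP.
    by move: h1 => /eqP; rewrite mulf_eq0 (negbTE pv) orbF.
  by move: h2 => /eqP; rewrite mulf_eq0 (negbTE pv) orbF.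
have b0 : b 0%N = 0.
  case: pw => pw; apply/eqP.
    by move: h1' => /eqP; rewrite mulf_eq0 (negbTE pw) orbF.
  by move: h2' => /eqP; rewrite mulf_eq0 (negbTE pw) orbF.
apply: (IH (shift a) (shift b)).
  move: e; rewrite /scale2 => -[e1 e2]; congr pair; apply: funext => j;
    by rewrite -!ps_mulS // ?e1 ?e2.
by move: nz; rewrite /scale2 /= !ps_mulS.
Qed.

Lemma not_disj (x : M p) : ~ (sval x).1 `&` (sval x).2 = [set zero2 p] ->
  exists z, (sval x).1 z /\ (sval x).2 z /\ prim z.
Proof.
case: x => -[N1 N2] [m1 m2] /= nd.
have [v [e1 pv]] := max_prim m1; have [w [e2 pw]] := max_prim m2.
simpl in e1, e2; rewrite e1 e2 in nd *.
have : exists z, (cyc v `&` cyc w) z /\ z <> zero2 p.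
  apply: contrapT => hn; apply: nd; apply/seteqP; split => y.
    by move=> hy; apply: contrapT => ny; apply: hn; exists y.
  by move=> ->; split; apply: zero_cyc.
case=> z [[[a _ ea] [b _ eb]] nz].
have [k nzk] : exists k, z.1 k != 0 \/ z.2 k != 0.
  apply: contrapT => hn; apply: nz; case: z {ea eb} hn => z1 z2 hn.
  rewrite /zero2; congr pair; apply: funext => k; apply: contrapT => hk;
    apply: hn; exists k; [left | right]; exact/eqP.
have e : scale2 a v = scale2 b w by rewrite ea eb.
have nzk' : (scale2 a v).1 k != 0 \/ (scale2 a v).2 k != 0 by rewrite ea.
have [a' [b' [e' pz]]] := descent pv pw e nzk'.
by exists (scale2 a' v); split; [exists a'|split; [exists b'|]].
Qed.
End Om.

Lemma ge1 (R: realType) (y : \bar R) :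
  (forall n, ((n%:R / n.+1%:R : R)%:E <= y)%E) -> (1 <= y)%E.
Proof.
move=> H; apply/lee_addgt0Pr => e e0.
set n := Num.truncn (e^-1).
have hn : e^-1 < n.+1%:R by exact: truncnS_gt.
apply: (@le_trans _ _ (n%:R / n.+1%:R + e)%:E); last first.
  by rewrite EFinD leeD2r // H.
rewrite lee_fin.
have h1 : 1 = n%:R / n.+1%:R + n.+1%:R^-1 :> R.
  by rewrite -[X in _ + X]mul1r -mulrDl natr1 divff // pnatr_eq0.
rewrite [X in X <= _]h1 lerD2l.
rewrite -(invrK e) ltW // ltf_pV2 // ?posrE ?invr_gt0 //.
Qed.

Lemma getc_trunc0 p n (a : Omega p) : getc (trunc n.+1 a) 0 = a 0%N.
Proof. by rewrite /getc; case: insubP => // i _ vi; rewrite ffunE vi. Qed.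

Section Main.
Local Open Scope classical_set_scope.
Variables (p : nat) (p_prime : prime p) (R : realType) (P : probability (Mmeas p) R).
Hypothesis P_compat : forall (n : nat) (A : {set {set Omegan2 p n} * {set Omegan2 p n}}),
      (1 <= n)%N -> A \subset Mn p n ->
      P (@piM p n @^-1` [set x | x \in A]) = (Pn R A)%:E.

Definition Bk k : set (Mmeas p) :=
  @piM p k.+1 @^-1` [set x | x \in Mn p k.+1 :\: Dn p k.+1].

Lemma Bk_meas k : measurable (Bk k).
Proof.
apply: sub_gen_smallest; exists k.+1, (Mn p k.+1 :\: Dn p k.+1); split => //.
split => //; exact: subsetDl.
Qed.

Lemma Bk_P k : ((k%:R / k.+1%:R : R)%:E <= P (Bk k))%E.
Proof.
rewrite /Bk P_compat // ?subsetDl // lee_fin.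
exact: (@Pn_bound p k.+1 (ltn0Sn k) p_prime R).
Qed.

Lemma Bk_Disj k : Bk k `<=` @Disj p.
Proof.
move=> x; rewrite /Bk /= inE => /andP [nD inM].
apply: contrapT => nd; have [z [z1 [z2 pz]]] := not_disj nd.
move/negP: nD; apply; rewrite inE inM /=; apply/existsP; exists (trunc2 k.+1 z).
rewrite /piM /= !inE; apply/and3P; split.
- by apply/asboolP; exists z.
- by apply/asboolP; exists z.
- by rewrite /primn /trunc2 /= !getc_trunc0; case: pz => ->; rewrite ?orbT.
Qed.
End Main.

Local Open Scope classical_set_scope.
Local Open Scope ring_scope.

Theorem theorem4p8 (p : nat) (p_prime : prime p) (R : realType)
  (P : probability (Mmeas p) R)
  (P_compat : forall (n : nat) (A : {set {set Omegan2 p n} * {set Omegan2 p n}}),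
      (1 <= n)%N -> A \subset Mn p n ->
      P (@piM p n @^-1` [set x | x \in A]) = (Pn R A)%:E) :
  outerP P (@Disj p) = 1%E /\ innerP P (@Disj p) = 1%E.
Proof.
split.
- apply/eqP; rewrite eq_le; apply/andP; split.
    apply: (@le_trans _ _ (P setT)); last by rewrite probability_setT.
    by apply: ereal_inf_lbound; exists setT.
  apply: le_ereal_inf_tmp => y [B [mB sB] <-].
  apply: ge1 => k; apply: le_trans (Bk_P p_prime P_compat k) _.
  apply: le_measure; rewrite ?inE //; first exact: Bk_meas.
  by move=> x hx; apply: sB; exact: (Bk_Disj hx).
- apply/eqP; rewrite eq_le; apply/andP; split.
    by apply: ge_ereal_sup => y [B [mB _] <-]; apply: probability_le1.
  apply: ge1 => k; apply: ereal_sup_ge; exists (P (@Bk p k)); last exact: (Bk_P p_prime P_compat k).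
  by exists (@Bk p k) => //; split; [exact: Bk_meas | exact: Bk_Disj].
Qed.
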